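(* Let $n\ge 2$ and let $\mathcal{C}\subseteq\{0,1\}^{n\times n}$ be a code. Then $\mathcal{C}$ is a $(1,1)$-criss-cross deletion correcting code if and only if it is a $(1,1)$-criss-cross insertion correcting code.
   Context: For a binary array $\mathbf{X}$, $\mathbb{D}_{t_r,t_c}(\mathbf{X})$ denotes the set of all arrays obtained from $\mathbf{X}$ by deleting any $t_r$ rows and any $t_c$ columns, and $\mathbb{I}_{t_r,t_c}(\mathbf{X})$ the set of all binary arrays obtained from $\mathbf{X}$ by inserting $t_r$ rows and $t_c$ columns (with arbitrary binary content, at arbitrary positions). A code $\mathcal{C}\subseteq\{0,1\}^{n\times n}$ is a $(t_r,t_c)$-criss-cross deletion correcting code if it can correct any deletion of $t_r$ rows and $t_c$ columns, i.e. $\mathbb{D}_{t_r,t_c}(\mathbf{X})\cap\mathbb{D}_{t_r,t_c}(\mathbf{Y})=\emptyset$ for all distinct $\mathbf{X},\mathbf{Y}\in\mathcal{C}$; a $(t_r,t_c)$-criss-cross insertion correcting code is defined analogously with $\mathbb{I}_{t_r,t_c}$. *)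

(* Defs.v *)
From mathcomp Require Import all_boot all_algebra.
Set Implicit Arguments. Unset Strict Implicit. Unset Printing Implicit Defensive.

Definition barray (m k : nat) := 'M[bool]_(m, k).

Definition del11 (m k : nat) (X : barray m.+1 k.+1) (i : 'I_m.+1) (j : 'I_k.+1)
  : barray m k := (\matrix_(r < m, c < k) X (lift i r) (lift j c))%R.

Definition D11 (m k : nat) (X : barray m.+1 k.+1) : {set barray m k} :=
  [set del11 X i j | i : 'I_m.+1, j : 'I_k.+1].

(* I_{1,1}(X) : all binary arrays obtained by inserting one row and one column
   (arbitrary contents, arbitrary positions); equivalently, all Y of size
   (m+1) x (k+1) from which X is obtained by deleting a row and a column. *)
Definition I11 (m k : nat) (X : barray m k) : {set barray m.+1 k.+1} :=
  [set Y : barray m.+1 k.+1 | [exists i, exists j, del11 Y i j == X]].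

Definition deletion_correcting11 (n' : nat) (C : {set barray n'.+1 n'.+1}) :=
  forall X Y, X \in C -> Y \in C -> X != Y -> D11 X :&: D11 Y = set0.

Definition insertion_correcting11 (n' : nat) (C : {set barray n'.+1 n'.+1}) :=
  forall X Y, X \in C -> Y \in C -> X != Y -> I11 X :&: I11 Y = set0.

(* Main.v *)
Require Import Defs.
From mathcomp Require Import all_boot all_algebra.
From mathcomp Require Import zify.

Lemma lift_val n (i : 'I_n.+1) (j : 'I_n) : val (lift i j) = ((i <= j) + j)%N.
Proof. by []. Qed.

Lemma oneD m (i i' : 'I_m.+1) : exists a c : 'I_m.+2,
  [/\ lift a i = c, lift c i' = a & forall t : 'I_m, lift a (lift i t) = lift c (lift i' t)].
Proof.
case: (leqP i i') => h.
- have ha : (i'.+1 < m.+2)%N by rewrite ltnS.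
  have hc : (nat_of_ord i < m.+2)%N by apply: leq_trans (ltn_ord i) _.
  exists (Ordinal ha), (Ordinal hc); split.
  + apply: val_inj; rewrite lift_val /=; lia.
  + apply: val_inj; rewrite lift_val /=; lia.
  + move=> t; apply: val_inj; rewrite !lift_val /=.
    lia.
- have ha : (nat_of_ord i' < m.+2)%N by apply: leq_trans (ltn_ord i') _.
  have hc : (i.+1 < m.+2)%N by rewrite ltnS.
  exists (Ordinal ha), (Ordinal hc); split.
  + apply: val_inj; rewrite lift_val /=; lia.
  + apply: val_inj; rewrite lift_val /=; lia.
  + move=> t; apply: val_inj; rewrite !lift_val /=.
    lia.
Qed.

Lemma oneI m (a c : 'I_m.+2) : exists i i' : 'I_m.+1,
  forall t : 'I_m, lift a (lift i t) = lift c (lift i' t).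
Proof.
case: (ltngtP a c) => h.
- have hi : (c.-1 < m.+1)%N by have := ltn_ord c; lia.
  have hi' : (nat_of_ord a < m.+1)%N by have := ltn_ord c; lia.
  exists (Ordinal hi), (Ordinal hi') => t; apply: val_inj; rewrite !lift_val /=.
  lia.
- have hi : (nat_of_ord c < m.+1)%N by have := ltn_ord a; lia.
  have hi' : (a.-1 < m.+1)%N by have := ltn_ord a; lia.
  exists (Ordinal hi), (Ordinal hi') => t; apply: val_inj; rewrite !lift_val /=.
  lia.
- have -> : a = c by apply: val_inj. by exists ord0, ord0.
Qed.

Lemma DtoI m k (X Y : barray m.+1 k.+1) :
  D11 X :&: D11 Y != set0 -> I11 X :&: I11 Y != set0.
Proof.
case/set0Pn => Z; rewrite inE => /andP [/imset2P [i j _ _ ->]].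
case/imset2P => i' j' _ _ E.
have E' : forall r s, X (lift i r) (lift j s) = Y (lift i' r) (lift j' s).
  by move=> r s; move/matrixP: E => /(_ r s); rewrite !mxE.
have [a [c [ha hc ht]]] := oneD _ i i'.
have [b [d [hb hd hs]]] := oneD _ j j'.
pose W : barray m.+2 k.+2 := (\matrix_(u, v)
  match unlift a u, unlift b v with
  | Some r, Some s => X r s
  | _, _ => match unlift c u, unlift d v with
            | Some r, Some s => Y r s | _, _ => false end end)%R.
apply/set0Pn; exists W; rewrite !inE; apply/andP; split.
- apply/existsP; exists a; apply/existsP; exists b; apply/eqP/matrixP => r s.
  by rewrite !mxE !liftK.
- apply/existsP; exists c; apply/existsP; exists d; apply/eqP/matrixP => r s.
  rewrite !mxE !liftK.
  case: (unliftP a (lift c r)) => [r1 Er|Er]; case: (unliftP b (lift d s)) => [s1 Es|Es] //.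
  have hr1 : r1 != i by apply/eqP => e; move: Er; rewrite e ha => /eqP; rewrite eq_sym (negbTE (neq_lift _ _)).
  have hs1 : s1 != j by apply/eqP => e; move: Es; rewrite e hb => /eqP; rewrite eq_sym (negbTE (neq_lift _ _)).
  case: (unliftP i r1) hr1 => [t Et|->]; last by rewrite eqxx.
  case: (unliftP j s1) hs1 => [t2 Et2|->]; last by rewrite eqxx.
  move=> _ _; rewrite Et Et2 E'.
  move: Er Es; rewrite Et Et2 ht hs => /lift_inj -> /lift_inj -> //.
Qed.

Lemma ItoD m k (X Y : barray m.+1 k.+1) :
  I11 X :&: I11 Y != set0 -> D11 X :&: D11 Y != set0.
Proof.
case/set0Pn => W; rewrite !inE => /andP [/existsP [a /existsP [b /eqP EX]]].
case/existsP => c /existsP [d /eqP EY].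
have [i [i' hi]] := oneI _ a c.
have [j [j' hj]] := oneI _ b d.
apply/set0Pn; exists (del11 X i j); rewrite inE; apply/andP; split.
- by apply/imset2P; exists i j.
- apply/imset2P; exists i' j' => //; apply/matrixP => r s.
  by rewrite -EX -EY !mxE hi hj.
Qed.

Theorem theorem1 (n' : nat) (C : {set barray n'.+1 n'.+1}) :
  (2 <= n'.+1)%N ->
  (deletion_correcting11 C <-> insertion_correcting11 C).
Proof.
move=> _; split => H X Y hX hY hXY; apply/eqP; apply: contraT => hne.
- by move: (ItoD _ _ _ _ hne); rewrite H // eqxx.
- by move: (DtoI _ _ _ _ hne); rewrite H // eqxx.
Qed.
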